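(* Let $q\geq 19$ and $n\geq 2^q/\binom{q}{\leq 2}$ be integers, and let $\Delta$ be defined (as in the context) for the $q$-round pathological liar game with $2$ lies and initial state $(n,0,0)$. Then $$\Delta=-A\binom{q-1}{2}-B\binom{q-2}{1},$$ where $A=n\bmod 2$ and $B=0$ if $n\equiv 0\pmod 4$, $B=2\cdot(q\bmod 2)$ if $n\equiv1\pmod 4$, $B=(1-q^3)\bmod 4$ if $n\equiv 2\pmod 4$, and $B=(1+q^3)\bmod 4$ if $n\equiv 3\pmod 4$. Furthermore, there is a choice of questions $\vec{a},\vec{b}^{Y},\vec{b}^{N}$ attaining the maximum defining $\Delta$ such that every possible state after the first two rounds has last coordinate (number of elements with $2$ lies) at least $(q-2)^2+\binom{q-2}{\leq 2}$.
   Context: Liar game with $2$ lies: a state is $\vec{x}=(x_0,x_1,x_2)$ of nonnegative integers; a legal question is $\vec{a}=(a_0,a_1,a_2)$ with integers $0\leq a_i\leq x_i$; the two possible next states are $Y(\vec{x},\vec{a})=(a_0,\,a_1+x_0-a_0,\,a_2+x_1-a_1)$ and $N(\vec{x},\vec{a})=(x_0-a_0,\,x_1-a_1+a_0,\,x_2-a_2+a_1)$. Weight: $wt_j(\vec{x})=x_0\binom{j}{\leq 2}+x_1\binom{j}{\leq 1}+x_2$, with $\binom{j}{\leq m}=\sum_{i=0}^m\binom{j}{i}$. Weight imbalance: $\Delta_j(\vec{x},\vec{a})=wt_j(Y(\vec{x},\vec{a}))-wt_j(N(\vec{x},\vec{a}))$. For the initial state $(n,0,0)$, Paul's first question is $\vec{a}$,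 and his second question is $\vec{b}^{Y}$ (legal for $Y((n,0,0),\vec{a})$) if Carole answered Y and $\vec{b}^{N}$ (legal for $N((n,0,0),\vec{a})$) if she answered N. Set $\Delta_{q-1}=\Delta_{q-1}((n,0,0),\vec{a})$, $\Delta^{Y}_{q-2}=\Delta_{q-2}(Y((n,0,0),\vec{a}),\vec{b}^{Y})$, $\Delta^{N}_{q-2}=\Delta_{q-2}(N((n,0,0),\vec{a}),\vec{b}^{N})$. Then $\Delta$ is defined as the maximum, over all such legal $\vec{a},\vec{b}^{Y},\vec{b}^{N}$ for which $\Delta_{q-1},\Delta^{Y}_{q-2},\Delta^{N}_{q-2}$ are all nonnegative, of $$\min\{\Delta_{q-1}+2\Delta^{Y}_{q-2},\ \Delta_{q-1}-2\Delta^{Y}_{q-2},\ -\Delta_{q-1}+2\Delta^{N}_{q-2},\ -\Delta_{q-1}-2\Delta^{N}_{q-2}\}.$$ ''$m\bmod 2$'', ''$m\bmod 4$'' denote least nonnegative residues. *)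

(* Defs.v *)
From mathcomp Require Import all_boot all_order all_algebra.
Set Implicit Arguments. Unset Strict Implicit. Unset Printing Implicit Defensive.
Import Order.TTheory GRing.Theory Num.Theory.
Local Open Scope ring_scope.

Definition triple := (nat * nat * nat)%type.
Definition c0 (x : triple) : nat := x.1.1.
Definition c1 (x : triple) : nat := x.1.2.
Definition c2 (x : triple) : nat := x.2.

Definition legal (x a : triple) : bool :=
  [&& (c0 a <= c0 x)%N, (c1 a <= c1 x)%N & (c2 a <= c2 x)%N].

Definition Yst (x a : triple) : triple :=
  (c0 a, (c1 a + (c0 x - c0 a))%N, (c2 a + (c1 x - c1 a))%N).
Definition Nst (x a : triple) : triple :=
  ((c0 x - c0 a)%N, ((c1 x - c1 a) + c0 a)%N, ((c2 x - c2 a) + c1 a)%N).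

Definition binom_le (j m : nat) : nat := \sum_(i < m.+1) 'C(j, i).

Definition wt (j : nat) (x : triple) : int :=
  (c0 x * binom_le j 2 + c1 x * binom_le j 1 + c2 x)%N%:Z.

Definition Delta (j : nat) (x a : triple) : int :=
  wt j (Yst x a) - wt j (Nst x a).

Definition init (n : nat) : triple := (n, 0%N, 0%N).

(* The triples (a, bY, bN) over which the maximum defining Delta is taken. *)
Definition admissible (q n : nat) (a bY bN : triple) : Prop :=
  [/\ legal (init n) a, legal (Yst (init n) a) bY & legal (Nst (init n) a) bN] /\
  [/\ 0 <= Delta q.-1 (init n) a,
      0 <= Delta q.-2 (Yst (init n) a) bY &
      0 <= Delta q.-2 (Nst (init n) a) bN].

Definition value (q n : nat) (a bY bN : triple) : int :=
  let D1 := Delta q.-1 (init n) a in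
  let DY := Delta q.-2 (Yst (init n) a) bY in
  let DN := Delta q.-2 (Nst (init n) a) bN in
  Num.min (Num.min (D1 + 2 * DY) (D1 - 2 * DY))
          (Num.min (- D1 + 2 * DN) (- D1 - 2 * DN)).

Definition Bcoef (q n : nat) : int :=
  match (n %% 4)%N with
  | 0%N => 0
  | 1%N => 2 * (q %% 2)%N%:Z
  | 2%N => ((1 - (q%:Z) ^+ 3) %% 4)%Z
  | _ => ((1 + (q%:Z) ^+ 3) %% 4)%Z
  end.

Definition Delta_formula (q n : nat) : int :=
  - ((n %% 2)%N%:Z * ('C(q.-1, 2))%:Z) - Bcoef q n * ('C(q.-2, 1))%:Z.

(* Main.v *)
Require Import Defs.
From mathcomp Require Import all_boot all_order all_algebra zify ring lra.
Import Order.TTheory GRing.Theory Num.Theory.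
Local Open Scope ring_scope.
Set Warnings "-all".
Lemma binle2 j : binom_le j 2 = (1 + j + 'C(j,2))%N.
Proof. by rewrite /binom_le !big_ord_recr big_ord0 /= bin0 bin1. Qed.

Lemma DeltaE j x b : legal x b -> Delta j x b =
  (2 * (c0 b)%:Z - (c0 x)%:Z) * ('C(j,2))%:Z + (2 * (c1 b)%:Z - (c1 x)%:Z) * j%:Z
   + (2 * (c2 b)%:Z - (c2 x)%:Z).
Proof.
case: x => [[x0 x1] x2]; case: b => [[b0 b1] b2].
rewrite /legal /Delta /wt /Yst /Nst /c0 /c1 /c2 /= binle2 => /and3P[h0 h1 h2].
rewrite /binom_le !big_ord_recr big_ord0 /= bin0 bin1.
have [y0 ->] : exists y0, x0 = (b0 + y0)%N by exists (x0 - b0)%N; lia.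
have [y1 ->] : exists y1, x1 = (b1 + y1)%N by exists (x1 - b1)%N; lia.
have [y2 ->] : exists y2, x2 = (b2 + y2)%N by exists (x2 - b2)%N; lia.
rewrite !addKn !(PoszD, PoszM). ring.
Qed.

Lemma D2E j x0 x1 b0 b1 b2 : legal (x0, x1, 0%N) (b0, b1, b2) ->
  Delta j (x0, x1, 0%N) (b0, b1, b2) =
  (2 * b0%:Z - x0%:Z) * ('C(j,2))%:Z + (2 * b1%:Z - x1%:Z) * j%:Z.
Proof.
move=> h; rewrite DeltaE //; move: h; rewrite /legal /c0 /c1 /c2 /= => /and3P[_ _].
rewrite leqn0 => /eqP ->; lia.
Qed.

Lemma Y1E n a0 : Yst (init n) (a0, 0%N, 0%N) = (a0, (n - a0)%N, 0%N).
Proof. by rewrite /Yst /init /c0 /c1 /c2 /= add0n. Qed.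

Lemma N1E n a0 : Nst (init n) (a0, 0%N, 0%N) = ((n - a0)%N, a0, 0%N).
Proof. by rewrite /Nst /init /c0 /c1 /c2 /= subn0 add0n. Qed.

Lemma C2E x : ('C(x,2) * 2 + x = x * x)%N.
Proof.
have := bin_ffact x 2; rewrite ffactnS ffactn1 => ->.
case: x => //= x; rewrite mulSn; lia.
Qed.

Lemma pow_big q : (19 <= q)%N -> (4 * ((q * q) * (q * q)) <= 2 ^ q)%N.
Proof.
move=> hq; rewrite -(subnKC hq); elim: (q - 19)%N => [|k IH]; first by lia.
rewrite addnS expnS.
set x := (19 + k)%N in IH *.
have h1 : (100 * (x.+1 * x.+1) <= 111 * (x * x))%N.
  have : (19 * x <= x * x)%N by rewrite leq_mul2r; apply/orP; right; lia.
  lia.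
have h2 := leq_mul h1 h1.
move: h2 IH; move: (x.+1 * x.+1)%N (x * x)%N => A B.
lia.
Qed.

Lemma size_big q : (19 <= q)%N ->
  ((4 * ((q - 2) ^ 2 + binom_le (q - 2) 2) + 4 * q + 20) * binom_le q 2 <= 2 ^ q)%N.
Proof.
move=> hq; have hp := pow_big q hq.
rewrite !binle2.
have c1 := C2E q; have c2 := C2E (q - 2).
have hqq : (19 * q <= q * q)%N by rewrite leq_mul2r; apply/orP; right; lia.
have e2 : ((q - 2) * (q - 2) + 4 * q = q * q + 4)%N.
  rewrite -(subnKC (_ : 2 <= q)%N) //; last by lia.
  rewrite addKn; lia.
rewrite expnS expn1.
set X := (4 * _ + 4 * q + 20)%N.
set S := (1 + q + _)%N.
have hX : (2 * X <= 13 * (q * q))%N by rewrite /X; lia.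
have hS : (20 * S <= 11 * (q * q))%N by rewrite /S; lia.
have := leq_mul hX hS.
move: hp hX hS; clearbody X S; move: (q * q)%N X S => Q X' S'.
lia.
Qed.
Lemma twoD (X Y e d : int) : 2 * d = e * (e - 1) ->
  2 * (X * d + Y * e) = e * (X * (e - 1) + 2 * Y).
Proof. move=> h; rewrite mulrDr mulrA (mulrC 2 X) -mulrA h; ring. Qed.

Lemma upper_int (A B e d cc u D1 DY DN K : int) :
 17 <= e -> cc = d + e -> 2 * d = e * (e - 1) -> (A = 0 \/ A = 1) -> 0 <= B -> B <= 3 ->
 D1 = u * cc -> 0 <= D1 ->
 (u = A \/ A + 2 <= u) -> (u = A -> B <= K) -> 0 <= DY -> 0 <= DN -> 2 * DN = e * K ->
 Num.min (Num.min (D1 + 2 * DY) (D1 - 2 * DY)) (Num.min (- D1 + 2 * DN) (- D1 - 2 * DN))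
   <= - (A * cc) - B * e.
Proof.
move=> he hcc hd hA hB0 hB3 hD1 hD1p hu hK hDY hDN hDNK.
rewrite ge_min; apply/orP; right; rewrite ge_min; apply/orP; right.
have hee : 17 * e <= e * e by rewrite ler_wpM2r //; lia.
have ccp : 0 < cc by lia.
have u0 : 0 <= u by rewrite -(pmulr_lge0 _ ccp) -hD1.
have hBe : B * e <= 3 * e by rewrite ler_wpM2r //; lia.
case: hu => [hu|hu].
  have hKB : e * B <= e * K by rewrite ler_wpM2l //; [lia | exact: hK].
  rewrite hD1 hu; case: hA => ->; lia.
have : (A + 2) * cc <= u * cc by rewrite ler_wpM2r //; lia.
rewrite -hD1; case: hA => ->; lia.
Qed.

Lemma lower_int (A B e d cc D1 DY DN KY : int) :
 17 <= e -> cc = d + e -> 2 * d = e * (e - 1) -> (A = 0 \/ A = 1) -> 0 <= B ->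
 D1 = A * cc -> 2 * DN = e * B -> 2 * DY = e * KY -> 0 <= KY -> KY <= 4 ->
 (A = 0 -> KY = B) ->
 - (A * cc) - B * e <=
 Num.min (Num.min (D1 + 2 * DY) (D1 - 2 * DY)) (Num.min (- D1 + 2 * DN) (- D1 - 2 * DN)).
Proof.
move=> he hcc hd hA hB0 hD1 hDN hDY hK0 hK4 hKB.
have hee : 17 * e <= e * e by rewrite ler_wpM2r //; lia.
have h1 : 0 <= e * KY by rewrite mulr_ge0 //; lia.
have h2 : e * KY <= e * 4 by rewrite ler_wpM2l //; lia.
have h3 : 0 <= e * B by rewrite mulr_ge0 //; lia.
rewrite !le_min; case: hA hD1 hKB => -> hD1 hKB.
  rewrite hKB // in hDY; rewrite hD1; lia.
rewrite hD1; lia.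
Qed.
Lemma modq3 (q r : nat) (rho : nat) : q = (4 * r + rho)%N -> 
  ((1 - (q%:Z) ^+ 3) %% 4)%Z = ((1 - (rho%:Z)^+3) %% 4)%Z /\
  ((1 + (q%:Z) ^+ 3) %% 4)%Z = ((1 + (rho%:Z)^+3) %% 4)%Z.
Proof.
move=> ->; rewrite PoszD PoszM !exprS expr0 !mulr1.
split; lia.
Qed.

Lemma split4 (x : nat) : exists k rho, x = (4 * k + rho)%N /\ (rho < 4)%N.
Proof. exists (x %/ 4)%N, (x %% 4)%N; split; [lia | by rewrite ltn_mod]. Qed.

Definition Btab (nu rho : nat) : int :=
  match nu with
  | 0%N => 0
  | 1%N => 2 * (rho %% 2)%N%:Z
  | 2%N => match rho with 0%N => 1 | 1%N => 0 | 2%N => 1 | _ => 2 end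
  | _ => match rho with 0%N => 1 | 1%N => 2 | 2%N => 1 | _ => 0 end
  end.

Lemma BcoefE q n : Bcoef q n = Btab (n %% 4) (q %% 4).
Proof.
rewrite /Bcoef.
have [r [rho [hqe hrho]]] := split4 q.
have [m1 m2] := modq3 _ _ _ hqe.
have hm : (q %% 2 = (q %% 4) %% 2)%N by lia.
have h4 : (q %% 4 = rho)%N by lia.
rewrite hm h4 m1 m2.
case: (n %% 4)%N => [|[|[|[|?]]]] //=;
 case: rho hqe hrho {m1 m2 h4} => [|[|[|[|//]]]] //.
Qed.

Lemma Bbound q n : 0 <= Bcoef q n /\ Bcoef q n <= 3.
Proof.
rewrite BcoefE; have := ltn_mod q 4; have := ltn_mod n 4.
case: (n %% 4)%N => [|[|[|[|?]]]] //=; case: (q %% 4)%N => [|[|[|[|?]]]] //=.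
Qed.

Definition Kf (q n a0 r0 r1 : nat) : int :=
  (2 * r0%:Z - (n%:Z - a0%:Z)) * (q%:Z - 3) + 2 * (2 * r1%:Z - a0%:Z).

Lemma witness q n M : (19 <= q)%N -> (4*M + 4*q + 20 <= n)%N ->
 exists a0 p0 p1 r0 r1 : nat,
 [/\ (2*a0 = n + n%%2)%N,
   [/\ (a0 <= n)%N, (p0 <= a0)%N, (p1 <= n - a0)%N, (r0 <= n - a0)%N & (r1 <= a0)%N],
   Kf q n a0 r0 r1 = Bcoef q n,
   [/\ 0 <= Kf q n (n - a0) p0 p1, Kf q n (n - a0) p0 p1 <= 4 &
       ((n %% 2 = 0)%N -> Kf q n (n - a0) p0 p1 = Bcoef q n)]
 & [/\ (M <= n - a0 - p1)%N, (M <= p1)%N, (M <= a0 - r1)%N & (M <= r1)%N]].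
Proof.
move=> hq hn.
have [k [nu [hn' hnu]]] := split4 n.
have [r [rho [hq' hrho]]] := split4 q.
rewrite BcoefE (_ : (n %% 4 = nu)%N); last by lia.
rewrite (_ : (q %% 4 = rho)%N); last by lia.
rewrite /Kf; subst n q.
case: nu hnu hn => [|[|[|[|//]]]] _ hn; case: rho hrho hq hn => [|[|[|[|//]]]] _ hq hn /=.
- exists (2*k)%N, k, k, k, k; by repeat split; lia.
- exists (2*k)%N, k, k, k, k; by repeat split; lia.
- exists (2*k)%N, k, k, k, k; by repeat split; lia.
- exists (2*k)%N, k, k, k, k; by repeat split; lia.
- exists (2*k+1)%N, (k+1)%N, (k+1-r)%N, (k+1)%N, (k+2-2*r)%N; by repeat split; lia.
- exists (2*k+1)%N, (k+1)%N, (k+1-r)%N, k, (k+1)%N; by repeat split; lia.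
- exists (2*k+1)%N, (k+1)%N, (k+1-r)%N, (k+1)%N, (k+1-2*r)%N; by repeat split; lia.
- exists (2*k+1)%N, (k+1)%N, (k+1-r)%N, k, (k+1)%N; by repeat split; lia.
- exists (2*k+1)%N, k, (k+r)%N, k, (k+r)%N; by repeat split; lia.
- exists (2*k+1)%N, (k+1)%N, (k+1-r)%N, (k+1)%N, (k+1-r)%N; by repeat split; lia.
- exists (2*k+1)%N, (k+1)%N, (k+1-r)%N, (k+1)%N, (k+1-r)%N; by repeat split; lia.
- exists (2*k+1)%N, (k+1)%N, (k+1-r)%N, (k+1)%N, (k+1-r)%N; by repeat split; lia.
- exists (2*k+2)%N, (k+1)%N, (k+1)%N, (k+1)%N, (k+2-r)%N; by repeat split; lia.
- exists (2*k+2)%N, (k+1)%N, (k+1)%N, (k+1)%N, (k+2-r)%N; by repeat split; lia.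
- exists (2*k+2)%N, (k+1)%N, (k+1)%N, k, (k+1+r)%N; by repeat split; lia.
- exists (2*k+2)%N, (k+1)%N, (k+1)%N, (k+1)%N, (k+1-r)%N; by repeat split; lia.
Qed.
Lemma Kcore q n a0 r0 r1 : (19 <= q)%N -> (2 * a0 = n + n %% 2)%N ->
  0 <= Kf q n a0 r0 r1 -> Bcoef q n <= Kf q n a0 r0 r1.
Proof.
rewrite /Kf => hq ha hK; rewrite /Bcoef.
have [k [nu [hn hnu]]] := split4 n.
have [r [rho [hqe hrho]]] := split4 q.
have [m1 m2] := modq3 _ _ _ hqe.
have hn4 : (n %% 4 = nu)%N by lia.
rewrite hn4.
move: hK.
have hm : (q %% 2 = rho %% 2)%N by lia.
case: nu hn hn4 hnu => [|[|[|[|//]]]] hn hn4 _ /=; rewrite ?m1 ?m2 ?hm hqe !PoszD ?PoszM; clear m1 m2 hm hqe;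
 case: rho hrho => [|[|[|[|//]]]] _ /=; lia.
Qed.

Lemma Dvals q n a0 p0 p1 r0 r1 : (19 <= q)%N -> (a0 <= n)%N -> (p0 <= a0)%N ->
  (p1 <= n - a0)%N -> (r0 <= n - a0)%N -> (r1 <= a0)%N ->
  [/\ Delta q.-1 (init n) (a0, 0%N, 0%N) = (2 * a0%:Z - n%:Z) * ('C(q.-1, 2))%:Z,
      2 * Delta q.-2 (Yst (init n) (a0, 0%N, 0%N)) (p0, p1, 0%N) =
        (q.-2)%:Z * Kf q n (n - a0) p0 p1 &
      2 * Delta q.-2 (Nst (init n) (a0, 0%N, 0%N)) (r0, r1, 0%N) =
        (q.-2)%:Z * Kf q n a0 r0 r1].
Proof.
move=> hq ha hp0 hp1 hr0 hr1.
have hd : 2 * ('C(q.-2, 2))%:Z = (q.-2)%:Z * ((q.-2)%:Z - 1).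
  have := C2E q.-2; lia.
have hq3 : q%:Z - 3 = (q.-2)%:Z - 1 by lia.
split.
- rewrite DeltaE; last by rewrite /legal /init /c0 /c1 /c2 /=; lia.
  rewrite /init /c0 /c1 /c2 /=; lia.
- rewrite Y1E D2E; last by rewrite /legal /c0 /c1 /c2 /=; lia.
  rewrite /Kf hq3 (_ : n%:Z - (n - a0)%N%:Z = a0%:Z); last by lia.
  exact: twoD.
- rewrite N1E D2E; last by rewrite /legal /c0 /c1 /c2 /=; lia.
  rewrite /Kf hq3 (_ : n%:Z - a0%:Z = (n - a0)%N%:Z); last by lia.
  exact: twoD.
Qed.

Theorem lemma15 (q n : nat) (hq : (19 <= q)%N)
    (hn : (2 ^ q <= n * binom_le q 2)%N) :
  (forall a bY bN : triple, admissible q n a bY bN ->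
      value q n a bY bN <= Delta_formula q n) /\
  (exists a bY bN : triple,
      [/\ admissible q n a bY bN,
          value q n a bY bN = Delta_formula q n &
          let x1 := Yst (init n) a in
          let x2 := Nst (init n) a in
          let m := ((q - 2) ^ 2 + binom_le (q - 2) 2)%N in
          [/\ (m <= c2 (Yst x1 bY))%N, (m <= c2 (Nst x1 bY))%N,
              (m <= c2 (Yst x2 bN))%N & (m <= c2 (Nst x2 bN))%N]]).
Proof.
have nL : (4 * ((q - 2) ^ 2 + binom_le (q - 2) 2) + 4 * q + 20 <= n)%N.
  have := leq_trans (size_big q hq) hn.
  by rewrite leq_pmul2r // binle2.
have hd : 2 * ('C(q.-2, 2))%:Z = (q.-2)%:Z * ((q.-2)%:Z - 1).
  have := C2E q.-2; lia.
have hcc : ('C(q.-1, 2))%:Z = ('C(q.-2, 2))%:Z + (q.-2)%:Z.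
  rewrite (_ : q.-1 = (q.-2).+1); last by lia.
  by rewrite binS bin1 PoszD.
have he : 17 <= (q.-2)%:Z by lia.
have part1 : forall a bY bN : triple, admissible q n a bY bN ->
      value q n a bY bN <= Delta_formula q n.
  move=> [[a0 a1] a2] [[p0 p1] p2] [[r0 r1] r2] [[la lY lN] [h1 hY hN]].
  move: la; rewrite /legal /init /c0 /c1 /c2 /= => /and3P[ha0 ha1 ha2].
  have a10 : a1 = 0%N by lia.
  have a20 : a2 = 0%N by lia.
  subst a1 a2.
  move: (lY) (lN); rewrite Y1E N1E /legal /c0 /c1 /c2 /= => /and3P[hp0 hp1 hp2] /and3P[hr0 hr1 hr2].
  have p20 : p2 = 0%N by lia.
  have r20 : r2 = 0%N by lia.
  subst p2 r2.
  have [E1 EY EN] := @Dvals _ _ _ _ _ _ _ hq ha0 hp0 hp1 hr0 hr1.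
  have [hB0 hB3] := Bbound q n.
  rewrite /value /Delta_formula bin1.
  apply: (@upper_int (n %% 2)%N%:Z (Bcoef q n) (q.-2)%:Z ('C(q.-2, 2))%:Z
            ('C(q.-1, 2))%:Z (2 * a0%:Z - n%:Z) _ _ _ (Kf q n a0 r0 r1)) => //.
  - lia.
  - move: h1; rewrite E1 => h1.
    have ccp : 0 < ('C(q.-1, 2))%:Z by lia.
    have : 0 <= 2 * a0%:Z - n%:Z by rewrite -(pmulr_lge0 _ ccp).
    lia.
  - move=> hu; apply: Kcore => //; first by lia.
    have : 0 <= (q.-2)%:Z * Kf q n a0 r0 r1 by rewrite -EN; lia.
    by rewrite pmulr_rge0 //; lia.
have [a0 [p0 [p1 [r0 [r1 [ha [ha0 hp0 hp1 hr0 hr1] hK [hKY0 hKY4 hKYB] hm]]]]]] :=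
  witness q n ((q - 2) ^ 2 + binom_le (q - 2) 2)%N hq nL.
split => //.
have [E1 EY EN] := @Dvals _ _ _ _ _ _ _ hq ha0 hp0 hp1 hr0 hr1.
have adm : admissible q n (a0, 0%N, 0%N) (p0, p1, 0%N) (r0, r1, 0%N).
  split; split.
  - by rewrite /legal /init /c0 /c1 /c2 /=; lia.
  - by rewrite Y1E /legal /c0 /c1 /c2 /=; lia.
  - by rewrite N1E /legal /c0 /c1 /c2 /=; lia.
  - rewrite E1; apply: mulr_ge0; lia.
  - have : 0 <= (q.-2)%:Z * Kf q n (n - a0) p0 p1 by apply: mulr_ge0; lia.
    rewrite -EY; lia.
  - have [hB0 _] := Bbound q n.
    have : 0 <= (q.-2)%:Z * Kf q n a0 r0 r1 by rewrite hK; apply: mulr_ge0; lia.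
    rewrite -EN; lia.
exists (a0, 0%N, 0%N), (p0, p1, 0%N), (r0, r1, 0%N); split => //.
- apply/le_anti/andP; split; first exact: part1.
  have [hB0 _] := Bbound q n.
  rewrite /value /Delta_formula bin1.
  apply: (@lower_int (n %% 2)%N%:Z (Bcoef q n) (q.-2)%:Z ('C(q.-2, 2))%:Z
            ('C(q.-1, 2))%:Z _ _ _ (Kf q n (n - a0) p0 p1)) => //.
  + lia.
  + rewrite E1; congr (_ * _); lia.
  + by rewrite EN hK.
  + move=> hA; apply: hKYB; lia.
Qed.
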